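(* Let $\mu\in\mathcal C$ be nilpotent, let $\mathfrak z$ be the centre of $(\mathfrak g,\mu)$, $\mathfrak z^\perp$ its orthogonal complement, $\mathrm{Pr}_{\mathfrak z},\mathrm{Pr}_{\mathfrak z^\perp}$ the orthogonal projections, $\mu_0:=\mathrm{Pr}_{\mathfrak z}\circ\mu$ and $\mu_1:=\mathrm{Pr}_{\mathfrak z^\perp}\circ\mu$. Let $D\in\mathfrak{gl}(\mathfrak g,J)$. Then $D\in\mathrm{Der}(\mu)$ if and only if $D(\mathfrak z)\subset\mathfrak z$ and the endomorphisms $D_{00}:=\mathrm{Pr}_{\mathfrak z}D\,\mathrm{Pr}_{\mathfrak z}$, $D_{01}:=\mathrm{Pr}_{\mathfrak z}D\,\mathrm{Pr}_{\mathfrak z^\perp}$, $D_{11}:=\mathrm{Pr}_{\mathfrak z^\perp}D\,\mathrm{Pr}_{\mathfrak z^\perp}$ of $\mathfrak g$ satisfy $$D_{00}\mu_0(v,w)+D_{01}\mu_1(v,w)-\mu_0(D_{11}v,w)-\mu_0(v,D_{11}w)=0\quad\text{for all }v,w\in\mathfrak g,$$ and $D_{11}\in\mathrm{Der}(\mu_1)$.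
   Context: $\mathfrak g$ is a real vector space of dimension $2n$ with complex structure $J$ and inner product $\langle\cdot,\cdot\rangle$ for which $J$ is orthogonal. A bracket is a skew-symmetric bilinear map $\mathfrak g\times\mathfrak g\to\mathfrak g$; $\mathcal C$ is the set of brackets satisfying the Jacobi identity and $\nu(J\cdot,\cdot)=J\nu(\cdot,\cdot)$. $\mathfrak{gl}(\mathfrak g,J)=\{A\in\mathrm{End}(\mathfrak g):AJ=JA\}$. For a bracket $\nu$, $\mathrm{Der}(\nu)=\{D\in\mathfrak{gl}(\mathfrak g,J): D\nu(\cdot,\cdot)=\nu(D\cdot,\cdot)+\nu(\cdot,D\cdot)\}$. *)

(* Defs.v *)
From HB Require Import structures.
From mathcomp Require Import all_boot all_order all_algebra.
From mathcomp Require Import reals.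
From Stdlib Require Import ClassicalEpsilon.
Set Implicit Arguments. Unset Strict Implicit. Unset Printing Implicit Defensive.
Import Order.TTheory GRing.Theory Num.Theory.
Local Open Scope ring_scope.

Section Defs.
Variables (R : realType) (n : nat).
Local Notation g := 'rV[R]_(n.*2).

Definition linear_map (f : g -> g) : Prop :=
  forall (a : R) (u v : g), f (a *: u + v) = a *: f u + f v.

Definition complex_structure (J : g -> g) : Prop :=
  linear_map J /\ forall v, J (J v) = - v.

Definition inner_product (ip : g -> g -> R) : Prop :=
  (forall (a : R) (u v w : g), ip (a *: u + v) w = a * ip u w + ip v w) /\
  (forall u v, ip u v = ip v u) /\
  (forall u, u != 0 -> 0 < ip u u).

Definition orthogonal_J (ip : g -> g -> R) (J : g -> g) : Prop :=
  forall u v, ip (J u) (J v) = ip u v.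

Definition bracket (nu : g -> g -> g) : Prop :=
  (forall (a : R) (u v w : g), nu (a *: u + v) w = a *: nu u w + nu v w) /\
  (forall u v, nu u v = - nu v u).

Definition jacobi (nu : g -> g -> g) : Prop :=
  forall u v w, nu u (nu v w) + nu v (nu w u) + nu w (nu u v) = 0.

Definition in_C (J : g -> g) (nu : g -> g -> g) : Prop :=
  bracket nu /\ jacobi nu /\ forall u v, nu (J u) v = J (nu u v).

(* nilpotent: some k with [x_1,[x_2,...,[x_k,y]...]] = 0 for all x_i, y,
   i.e. the k-th term of the lower central series vanishes *)
Definition nilpotent (nu : g -> g -> g) : Prop :=
  exists k : nat, forall (xs : seq g) (y : g), size xs = k -> foldr nu y xs = 0.

Definition centre (nu : g -> g -> g) (x : g) : Prop := forall y, nu x y = 0.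

Definition orth_compl (ip : g -> g -> R) (Z : g -> Prop) (v : g) : Prop :=
  forall w, Z w -> ip v w = 0.

Definition orth_proj (ip : g -> g -> R) (Z : g -> Prop) (v : g) : g :=
  epsilon (inhabits (0 : g))
    (fun p => Z p /\ forall w, Z w -> ip (v - p) w = 0).

Definition gl_J (J : g -> g) (D : g -> g) : Prop :=
  linear_map D /\ forall v, D (J v) = J (D v).

Definition Der (J : g -> g) (nu : g -> g -> g) (D : g -> g) : Prop :=
  gl_J J D /\ forall u v, D (nu u v) = nu (D u) v + nu u (D v).

End Defs.

(* Main.v *)
Require Import Defs.
From HB Require Import structures.
From mathcomp Require Import all_boot all_order all_algebra.
From mathcomp Require Import reals.
From Stdlib Require Import Classical ClassicalEpsilon.
Import Order.TTheory GRing.Theory Num.Theory.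
Local Open Scope ring_scope.
Set Implicit Arguments. Unset Strict Implicit.

Lemma ip_lin (R : realType) (n : nat) (ip : 'rV[R]_(n.*2) -> 'rV[R]_(n.*2) -> R) :
  inner_product ip ->
  [/\ (forall u v w, ip (u + v) w = ip u w + ip v w),
      (forall a u w, ip (a *: u) w = a * ip u w),
      (forall u v w, ip w (u + v) = ip w u + ip w v),
      (forall a u w, ip w (a *: u) = a * ip w u) &
      (forall u w, ip (u - w) u = ip u u - ip w u)].
Proof.
case=> Hl [Hs _].
have D : forall u v w, ip (u + v) w = ip u w + ip v w.
  by move=> u v w; have := Hl 1 u v w; rewrite scale1r mul1r.
have Z : forall a u w, ip (a *: u) w = a * ip u w.
  move=> a u w; have := Hl a u 0 w; rewrite addr0 => ->.
  have := Hl 1 0 0 w; rewrite scaler0 addr0 mul1r => H.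
  have : ip 0 w + 0 = ip 0 w + ip 0 w by rewrite addr0.
  by move/addrI => <-; rewrite addr0.
split => //.
- by move=> u v w; rewrite Hs D -!(Hs w).
- by move=> a u w; rewrite Hs Z Hs.
- by move=> u w; rewrite D -scaleN1r Z mulN1r.
Qed.
Lemma lin_props (R : realType) (n : nat) (f : 'rV[R]_(n.*2) -> 'rV[R]_(n.*2)) :
  linear_map f ->
  [/\ (forall u v, f (u + v) = f u + f v), (forall a u, f (a *: u) = a *: f u),
      f 0 = 0, (forall u, f (- u) = - f u) & (forall u v, f (u - v) = f u - f v)].
Proof.
move=> Hf.
have D : forall u v, f (u + v) = f u + f v.
  by move=> u v; have := Hf 1 u v; rewrite !scale1r.
have f0 : f 0 = 0.
  have := D 0 0; rewrite addr0 => H.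
  have : f 0 + 0 = f 0 + f 0 by rewrite addr0.
  by move/addrI => <-.
have Z : forall a u, f (a *: u) = a *: f u.
  by move=> a u; have := Hf a u 0; rewrite !addr0 f0 addr0.
have N : forall u, f (- u) = - f u.
  by move=> u; rewrite -scaleN1r Z scaleN1r.
split => // u v; by rewrite D N.
Qed.

Lemma proj_span (R : realType) (n : nat) (ip : 'rV[R]_(n.*2) -> 'rV[R]_(n.*2) -> R)
  (Hip : inner_product ip) (s : seq 'rV[R]_(n.*2)) (v : 'rV[R]_(n.*2)) :
  exists p, p \in <<s>>%VS /\ forall w, w \in <<s>>%VS -> ip (v - p) w = 0.
Proof.
have [Dl Zl Dr Zr _] := ip_lin Hip.
have [_ [Hs Hpos]] := Hip.
have Nl : forall u w, ip (- u) w = - ip u w.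
  by move=> u w; rewrite -scaleN1r Zl mulN1r.
have Nr : forall u w, ip w (- u) = - ip w u.
  by move=> u w; rewrite -scaleN1r Zr mulN1r.
elim: s v => [|x s IH] v.
  exists 0; split; first by rewrite mem0v.
  by move=> w; rewrite span_nil memv0 => /eqP ->; rewrite -(scale0r 0) Zr mul0r.
have [px [pxS pxO]] := IH x.
have [pv [pvS pvO]] := IH v.
have sub : (<<s>> <= <<x :: s>>)%VS by rewrite span_cons addvSr.
have subm : forall u, u \in <<s>>%VS -> u \in <<x :: s>>%VS by apply/subvP.
have xin : x \in <<x :: s>>%VS by apply: memv_span; rewrite mem_head.
set y := x - px.
have yO : forall t, t \in <<s>>%VS -> ip y t = 0 by exact: pxO.
have decomp : forall w, w \in <<x :: s>>%VS ->
    exists a t, t \in <<s>>%VS /\ w = a *: y + t.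
  move=> w; rewrite span_cons => /memv_addP [u /vlineP [a ->] [t tS ->]].
  exists a, (a *: px + t); split; first by rewrite rpredD // rpredZ.
  by rewrite /y scalerBr addrA subrK.
case: (eqVneq y 0) => [y0|ynz].
  exists pv; split; first exact: subm.
  move=> w /decomp [a [t [tS ->]]]; rewrite y0 scaler0 add0r; exact: pvO.
set c := ip v y / ip y y.
have yy : ip y y != 0 by rewrite gt_eqF // Hpos.
exists (pv + c *: y); split.
  apply: rpredD; first exact: subm.
  by apply: rpredZ; rewrite /y; apply: rpredB => //; exact: subm.
move=> w /decomp [a [t [tS ->]]].
have H1 : ip v t = ip pv t.
  by apply/eqP; rewrite -subr_eq0 -Nl -Dl pvO.
have H2 : ip pv y = 0 by rewrite Hs yO.
have H3 : ip y t = 0 by rewrite yO.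
rewrite opprD addrA Dr Zr !Dl !Nl !Zl H1 H2 H3 /c.
by rewrite divfK // subr0 subrr mulr0 subrr mulr0 subr0 addr0.
Qed.
Lemma subspace_vspace (R : realType) (n : nat) (Z : 'rV[R]_(n.*2) -> Prop) :
  Z 0 -> (forall u v, Z u -> Z v -> Z (u + v)) -> (forall (a : R) u, Z u -> Z (a *: u)) ->
  exists U : {vspace 'rV[R]_(n.*2)}, forall x, Z x <-> x \in U.
Proof.
move=> Z0 ZD ZZ.
suff H : forall k (U : {vspace 'rV[R]_(n.*2)}), (forall x, x \in U -> Z x) ->
    (\dim (fullv : {vspace 'rV[R]_(n.*2)}) <= \dim U + k)%N ->
    exists V : {vspace 'rV[R]_(n.*2)}, forall x, Z x <-> x \in V.
  apply: (H (\dim (fullv : {vspace 'rV[R]_(n.*2)})) 0%VS).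
    by move=> x; rewrite memv0 => /eqP ->.
  by rewrite leq_addl.
elim=> [|k IH] U UZ Hd.
all: case: (classic (exists x, Z x /\ x \notin U)) => [[x [Zx xU]]|Hn];
  last by exists U => x; split; [move=> Zx; apply: NNPP => /negP xU; apply: Hn; exists x | exact: UZ].
all: have sU : (U <= U + <[x]>)%VS by rewrite addvSl.
all: have lt : (\dim U < \dim (U + <[x]>))%N by
  rewrite (ltn_leqif (dimv_leqif_eq sU)); apply/negP => /eqP E;
  move: xU; rewrite E; apply/negP/negPn; apply: (subvP (addvSr U <[x]>%VS)); exact: memv_line.
all: have UZ' : forall y, y \in (U + <[x]>)%VS -> Z y by
  move=> y /memv_addP [u uU [w /vlineP [a ->] ->]]; apply: ZD; [exact: UZ | exact: ZZ].
- have := dimvS (subvf (U + <[x]>)%VS); rewrite addn0 in Hd.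
  by move=> H; have := leq_trans H Hd; rewrite leqNgt lt.
- apply: (IH _ UZ'); rewrite (leq_trans Hd) // -addSnnS leq_add2r //.
Qed.
Lemma orth_proj_spec (R : realType) (n : nat) (ip : 'rV[R]_(n.*2) -> 'rV[R]_(n.*2) -> R)
  (Z : 'rV[R]_(n.*2) -> Prop) : inner_product ip ->
  Z 0 -> (forall u v, Z u -> Z v -> Z (u + v)) -> (forall (a : R) u, Z u -> Z (a *: u)) ->
  forall v, Z (orth_proj ip Z v) /\ forall w, Z w -> ip (v - orth_proj ip Z v) w = 0.
Proof.
move=> Hip Z0 ZD ZZ v.
have [U HU] := subspace_vspace Z0 ZD ZZ.
have [p [pS pO]] := proj_span Hip (vbasis U) v.
rewrite (span_basis (vbasisP U)) in pS pO.
pose P := (fun p => Z p /\ forall w, Z w -> ip (v - p) w = 0).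
change (P (epsilon (inhabits (0 : 'rV[R]_(n.*2))) P)).
apply: epsilon_spec; exists p; split; first by apply/HU.
by move=> w /HU; apply: pO.
Qed.

Lemma orth_proj_uniq (R : realType) (n : nat) (ip : 'rV[R]_(n.*2) -> 'rV[R]_(n.*2) -> R)
  (Z : 'rV[R]_(n.*2) -> Prop) : inner_product ip ->
  Z 0 -> (forall u v, Z u -> Z v -> Z (u + v)) -> (forall (a : R) u, Z u -> Z (a *: u)) ->
  forall v p, Z p -> (forall w, Z w -> ip (v - p) w = 0) -> orth_proj ip Z v = p.
Proof.
move=> Hip Z0 ZD ZZ v p Zp pO.
have [Zq qO] := orth_proj_spec Hip Z0 ZD ZZ v.
set q := orth_proj ip Z v in Zq qO *.
have Zd : Z (p - q) by apply: ZD => //; rewrite -scaleN1r; apply: ZZ.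
have [Dl Zl _ _ _] := ip_lin Hip.
have [_ [_ Hpos]] := Hip.
have : ip (p - q) (p - q) = 0.
  have E : p - q = (v - q) + (-1) *: (v - p).
    by rewrite scaleN1r opprB [RHS]addrC addrA subrK.
  by rewrite {1}E Dl Zl qO // pO // mulr0 addr0.
move=> H; apply/eqP; rewrite eq_sym -subr_eq0; apply/negPn/negP => /Hpos.
by rewrite H ltxx.
Qed.
Lemma sub_trick (V : zmodType) (a b : V) : a + b - a - b = 0.
Proof. by rewrite [a + b]addrC addrK subrr. Qed.

Lemma lin_comb_id (R : realType) (n : nat) (a : R) (u v pu pv : 'rV[R]_(n.*2)) :
  a *: u + v - (a *: pu + pv) = a *: (u - pu) + (v - pv).
Proof. by rewrite scalerBr opprD addrACA. Qed.

Theorem proposition3p2 (R : realType) (n : nat)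
  (J : 'rV[R]_(n.*2) -> 'rV[R]_(n.*2))
  (ip : 'rV[R]_(n.*2) -> 'rV[R]_(n.*2) -> R)
  (mu : 'rV[R]_(n.*2) -> 'rV[R]_(n.*2) -> 'rV[R]_(n.*2))
  (D : 'rV[R]_(n.*2) -> 'rV[R]_(n.*2)) :
  complex_structure J -> inner_product ip -> orthogonal_J ip J ->
  in_C J mu -> nilpotent mu -> gl_J J D ->
  let z := centre mu in
  let Pz := orth_proj ip z in
  let Pzp := orth_proj ip (orth_compl ip z) in
  let mu0 := fun v w => Pz (mu v w) in
  let mu1 := fun v w => Pzp (mu v w) in
  let D00 := fun v => Pz (D (Pz v)) in
  let D01 := fun v => Pz (D (Pzp v)) in
  let D11 := fun v => Pzp (D (Pzp v)) in
  Der J mu D <->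
  ((forall x, z x -> z (D x)) /\
   (forall v w, D00 (mu0 v w) + D01 (mu1 v w)
                - mu0 (D11 v) w - mu0 v (D11 w) = 0) /\
   Der J mu1 D11).
Proof.
move=> [JL JJ] Hip HoJ [[muL muS] [_ muJ]] _ [DL DJ].
cbv zeta.
set z := centre mu.
have [JD JZ J0 JN JB] := lin_props JL.
have [DD DZ D0 DN DB] := lin_props DL.
have [ipDl ipZl ipDr ipZr _] := ip_lin Hip.
have [_ [ipS ipP]] := Hip.
have ip0l : forall w, ip 0 w = 0 by move=> w; rewrite -(scale0r 0) ipZl mul0r.
have ip0r : forall w, ip w 0 = 0 by move=> w; rewrite ipS.
have muLin : forall w, linear_map (fun u => mu u w) by move=> w a u v; exact: muL.
have muRin : forall w, linear_map (mu w).
  by move=> w a u v; rewrite muS muL opprD -scalerN -!muS.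
have mu0l : forall w, mu 0 w = 0 by move=> w; have [_ _ -> _ _] := lin_props (muLin w).
have mu0r : forall w, mu w 0 = 0 by move=> w; have [_ _ -> _ _] := lin_props (muRin w).
have muDl : forall u v w, mu (u + v) w = mu u w + mu v w
  by move=> u v w; have [-> _ _ _ _] := lin_props (muLin w).
have muDr : forall u v w, mu w (u + v) = mu w u + mu w v
  by move=> u v w; have [-> _ _ _ _] := lin_props (muRin w).
have muBl : forall u v w, mu (u - v) w = mu u w - mu v w
  by move=> u v w; have [_ _ _ _ ->] := lin_props (muLin w).
have muBr : forall u v w, mu w (u - v) = mu w u - mu w v
  by move=> u v w; have [_ _ _ _ ->] := lin_props (muRin w).
have z0 : z 0 by move=> y; exact: mu0l.
have zD : forall u v, z u -> z v -> z (u + v) by move=> u v zu zv y; rewrite muDl zu zv addr0.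
have zZ : forall (a : R) u, z u -> z (a *: u) by move=> a u zu y; have [_ -> _ _ _] := lin_props (muLin y); rewrite zu scaler0.
have zJ : forall u, z u -> z (J u) by move=> u zu y; rewrite muJ zu J0.
set zp := orth_compl ip z.
have zp0 : zp 0 by move=> w _; exact: ip0l.
have zpD : forall u v, zp u -> zp v -> zp (u + v) by move=> u v zu zv w zw; rewrite ipDl zu ?zv ?addr0.
have zpZ : forall (a : R) u, zp u -> zp (a *: u) by move=> a u zu w zw; rewrite ipZl zu ?mulr0.
have PS := orth_proj_spec Hip z0 zD zZ.
have PU := orth_proj_uniq Hip z0 zD zZ.
have QU := orth_proj_uniq Hip zp0 zpD zpZ.
set P := orth_proj ip z in PS PU *.
set Q := orth_proj ip zp in QU *.
have Qdef : forall v, Q v = v - P v.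
  move=> v; apply: QU.
    by move=> w zw; have [_ H] := PS v; apply: H.
  by move=> w zpw; rewrite subKr ipS; apply: zpw; have [] := PS v.
have PL : linear_map P.
  move=> a u v; apply: PU.
    by apply: zD; [apply: zZ|]; have [] := PS u; have [] := PS v.
  move=> w zw; rewrite lin_comb_id ipDl ipZl.
  by have [_ Hu] := PS u; have [_ Hv] := PS v; rewrite Hu // Hv // mulr0 addr0.
have [PD PZ P0 PN PB] := lin_props PL.
have Pid : forall x, z x -> P x = x by move=> x zx; apply: PU => // w _; rewrite subrr ip0l.
have zP : forall x, z (P x) by move=> x; have [] := PS x.
have PP : forall x, P (P x) = P x by move=> x; exact: Pid.
have PQ : forall x, P (Q x) = 0 by move=> x; rewrite Qdef PB PP subrr.
have QQ : forall x, Q (Q x) = Q x by move=> x; rewrite {1}Qdef PQ subr0.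
have Qz : forall x, z x -> Q x = 0 by move=> x zx; rewrite Qdef Pid // subrr.
have dec : forall x, x = P x + Q x by move=> x; rewrite Qdef addrC subrK.
have muQl : forall x w, mu (Q x) w = mu x w by move=> x w; rewrite Qdef muBl (zP x) subr0.
have muQr : forall x w, mu w (Q x) = mu w x by move=> x w; rewrite Qdef muBr (muS w (P x)) (zP x) oppr0 subr0.
have ipJ : forall a w, zp a -> z w -> ip (J a) w = 0.
  move=> a w za zw; rewrite -HoJ JJ -scaleN1r ipZl za ?mulr0 //; exact: zJ.
have PJ : forall x, P (J x) = J (P x).
  move=> x; apply: PU; first exact: zJ.
  move=> w zw; rewrite -JB; apply: ipJ => //.
  by move=> y zy; have [_ H] := PS x; apply: H.
have QJ : forall x, Q (J x) = J (Q x) by move=> x; rewrite !Qdef PJ JB.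
have QL : linear_map Q.
  by move=> a u v; rewrite !Qdef PL lin_comb_id.
have [QD QZ Q0 QN QB] := lin_props QL.
have A1 : forall m, P (D (P (P m))) + P (D (Q (Q m))) = P (D m).
  by move=> m; rewrite PP QQ -PD -DD -dec.
have key : (forall x, z x -> z (D x)) -> forall x, Q (D (Q x)) = Q (D x).
  move=> Dz x; rewrite [in RHS](dec x) DD QD (Qz (D (P x))) ?add0r //; exact: Dz.
split.
- move=> [_ Dmu].
  have Dz : forall x, z x -> z (D x).
    move=> x zx y; have E := Dmu x y.
    by rewrite (zx y) (zx (D y)) D0 addr0 in E; rewrite -E.
  split; first exact: Dz.
  have K := key Dz.
  split.
  + by move=> v w; rewrite A1 !K muQl muQr Dmu PD; exact: sub_trick.
  + split; first split.
    * by move=> a u v; rewrite QL DL QL.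
    * by move=> v; rewrite QJ DJ QJ.
    * by move=> u v; rewrite QQ !K muQl muQr Dmu QD.
- move=> [Dz [Heq [_ Hder]]].
  have K := key Dz.
  split; first by split.
  move=> u v.
  have E1 := Heq u v; rewrite A1 !K muQl muQr in E1.
  have E2 := Hder u v; rewrite QQ !K muQl muQr in E2.
  move/eqP: E1; rewrite -addrA -opprD subr_eq0 => /eqP E1.
  by rewrite (dec (D (mu u v))) E1 E2 -PD -QD -dec.
Qed.
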